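(* Let $\Phi=\{\varphi_i\}_{i\in\Lambda}$ be a similarity IFS in $\mathbb{R}^d$ with attractor $K$, let $F\subset\mathbb{R}^d$ be a nonempty compact set with $\varphi_iF\subseteq F$ for all $i\in\Lambda$, and let $c>0$. (1) If $\Phi$ is $(F,c)$-diffuse, then $\Phi$ is $(K,c)$-diffuse. (2) If $\Phi$ is $(K,c)$-diffuse, then for every $c'\in(0,c)$ and all large enough $n$, the IFS $\{\varphi_i\}_{i\in\Lambda^n}$ is $(F,c')$-diffuse.
   Context: A similarity IFS is a finite family of contracting similarities $\varphi_i$ of $\mathbb{R}^d$; its attractor $K$ is the unique nonempty compact set with $K=\bigcup_i\varphi_iK$; for $i=i_1\dots i_n$, $\varphi_i=\varphi_{i_1}\circ\dots\circ\varphi_{i_n}$. For a compact $F$ with $\varphi_iF\subseteq F$ for all $i$ and $c>0$, an IFS $\{\varphi_i\}_{i\in A}$ is $(F,c)$-diffuse if for every affine hyperplane $\mathcal{L}\subseteq\mathbb{R}^d$ there is $i\in A$ with $\varphi_iF\cap\mathcal{L}^{(c)}=\emptyset$, where $\mathcal{L}^{(c)}$ is the open $c$-neighborhood of $\mathcal{L}$. *)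

(* Defs.v *)
From HB Require Import structures.
From mathcomp Require Import all_boot all_order all_algebra.
From mathcomp Require Import all_classical all_reals all_analysis.
Set Implicit Arguments. Unset Strict Implicit. Unset Printing Implicit Defensive.
Import Order.TTheory GRing.Theory Num.Theory.
Import numFieldNormedType.Exports.
Local Open Scope classical_set_scope.
Local Open Scope ring_scope.

Section Defs.
Variables (R : realType) (d : nat).
Notation V := 'rV[R]_d.

Definition edist (x y : V) : R := Num.sqrt (\sum_(i < d) (x 0 i - y 0 i) ^+ 2).

Definition contracting_similarity (f : V -> V) : Prop :=
  exists r : R, 0 < r /\ r < 1 /\ forall x y, edist (f x) (f y) = r * edist x y.

Definition affine_hyperplane (L : set V) : Prop :=
  exists (a : V) (t : R), a != 0 /\ L = [set x | \sum_(i < d) a 0 i * x 0 i = t].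

Definition open_nbhd (L : set V) (c : R) : set V :=
  [set x | exists2 y, L y & edist x y < c].

Definition is_attractor (I : finType) (phi : I -> V -> V) (K : set V) : Prop :=
  [/\ K !=set0, compact K, K = \bigcup_(i in setT) (phi i @` K) &
      forall K' : set V, K' !=set0 -> compact K' ->
        K' = \bigcup_(i in setT) (phi i @` K') -> K' = K].

Definition diffuse (J : Type) (psi : J -> V -> V) (F : set V) (c : R) : Prop :=
  forall L : set V, affine_hyperplane L ->
    exists j : J, psi j @` F `&` open_nbhd L c = set0.

Definition word_map (I : Type) (phi : I -> V -> V) (w : seq I) : V -> V :=
  foldr (fun i f => phi i \o f) id w.

End Defs.

(* Main.v *)
From Pilot Require Import Defs.
From HB Require Import structures.
From mathcomp Require Import all_boot all_order all_algebra.
From mathcomp Require Import all_classical all_reals all_analysis.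
From mathcomp Require Import ring lra.
Import Order.TTheory GRing.Theory Num.Theory.
Import numFieldNormedType.Exports.
Local Open Scope classical_set_scope.
Local Open Scope ring_scope.
Local Notation edist := Pilot.Defs.edist.

Lemma edist_ge0 (R : realType) (d : nat) (x y : 'rV[R]_d) : 0 <= edist x y.
Proof. exact: sqrtr_ge0. Qed.

Lemma edistC (R : realType) (d : nat) (x y : 'rV[R]_d) : edist x y = edist y x.
Proof.
rewrite /edist; congr Num.sqrt; apply: eq_bigr => i _.
by rewrite -opprB sqrrN.
Qed.

Lemma CS {R : realType} {d : nat} (a b : 'I_d -> R) :
  \sum_i a i * b i <=
  Num.sqrt (\sum_i a i ^+ 2) * Num.sqrt (\sum_i b i ^+ 2).
Proof.
set A := \sum_i a i ^+ 2; set B := \sum_i b i ^+ 2.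
set S := \sum_i a i * b i.
set s := Num.sqrt A; set t := Num.sqrt B.
have A0 : 0 <= A by apply: sumr_ge0 => i _; exact: sqr_ge0.
have B0 : 0 <= B by apply: sumr_ge0 => i _; exact: sqr_ge0.
have sA : s ^+ 2 = A by rewrite sqr_sqrtr.
have tB : t ^+ 2 = B by rewrite sqr_sqrtr.
have H : 0 <= \sum_i (t * a i - s * b i) ^+ 2.
  by apply: sumr_ge0 => i _; exact: sqr_ge0.
have E : \sum_i (t * a i - s * b i) ^+ 2 = t ^+ 2 * A - 2 * s * t * S + s ^+ 2 * B.
  rewrite (eq_bigr (fun i => t ^+ 2 * a i ^+ 2 + (- (2 * s * t * (a i * b i)))
     + s ^+ 2 * b i ^+ 2)); last by move=> i _; ring.
  by rewrite !big_split /= sumrN -!mulr_sumr.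
rewrite E tB sA in H.
have s0 : 0 <= s by exact: sqrtr_ge0.
have t0 : 0 <= t by exact: sqrtr_ge0.
have [st0|st0] := eqVneq (s * t) 0.
  rewrite st0.
  have /orP[/eqP s00|/eqP t00] : (s == 0) || (t == 0) by rewrite -mulf_eq0 st0.
  - have A00 : A = 0 by rewrite -sA s00 expr0n.
    have := psumr_eq0P (fun i _ => sqr_ge0 (a i)) A00 => Ha.
    rewrite /S big1 // => i _.
    by have /eqP := Ha i isT; rewrite sqrf_eq0 => /eqP ->; rewrite mul0r.
  - have B00 : B = 0 by rewrite -tB t00 expr0n.
    have := psumr_eq0P (fun i _ => sqr_ge0 (b i)) B00 => Hb.
    rewrite /S big1 // => i _.
    by have /eqP := Hb i isT; rewrite sqrf_eq0 => /eqP ->; rewrite mulr0.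
have stp : 0 < s * t by rewrite lt_def st0 mulr_ge0.
have : 0 <= (2 * (s * t)) * (s * t - S).
  by rewrite -sA -tB in H; move: H; congr (_ <= _); ring.
rewrite pmulr_rge0 ?subr_ge0 //; rewrite mulr_gt0 //.
Qed.

Lemma edist_tri (R : realType) (d : nat) (x y z : 'rV[R]_d) :
  edist x z <= edist x y + edist y z.
Proof.
rewrite /edist.
set a := fun i : 'I_d => x 0 i - y 0 i.
set b := fun i : 'I_d => y 0 i - z 0 i.
have cs := CS a b.
set s := Num.sqrt _ in cs; set t := Num.sqrt (\sum_i b i ^+ 2) in cs.
have s0 : 0 <= s by exact: sqrtr_ge0.
have t0 : 0 <= t by exact: sqrtr_ge0.
have -> : s + t = Num.sqrt ((s + t) ^+ 2) by rewrite sqrtr_sqr ger0_norm // addr_ge0.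
apply: ler_wsqrtr.
have E : \sum_i (x 0 i - z 0 i) ^+ 2 =
   \sum_i a i ^+ 2 + 2 * \sum_i a i * b i + \sum_i b i ^+ 2.
  rewrite mulr_sumr -!big_split /=; apply: eq_bigr => i _; rewrite /a /b; ring.
rewrite E.
have sA : s ^+ 2 = \sum_i a i ^+ 2.
  by rewrite sqr_sqrtr // sumr_ge0 // => i _; exact: sqr_ge0.
have tB : t ^+ 2 = \sum_i b i ^+ 2.
  by rewrite sqr_sqrtr // sumr_ge0 // => i _; exact: sqr_ge0.
rewrite -sA -tB.
have : 2 * \sum_i a i * b i <= 2 * (s * t) by rewrite ler_pM2l.
move=> h; rewrite sqrrD; lra.
Qed.

Lemma unif_ratio {R : realType} {d : nat} {I : finType} {phi : I -> 'rV[R]_d -> 'rV[R]_d} :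
  (forall i, contracting_similarity (phi i)) ->
  exists q : R, 0 <= q /\ q < 1 /\ forall i x y, edist (phi i x) (phi i y) <= q * edist x y.
Proof.
move=> H; have [r Hr] := choice H.
exists (\big[Order.max/0]_i r i); split; first exact: bigmax_ge_id.
split.
  by apply: bigmax_lt => // i _; have [_ [] ] := Hr i.
move=> i x y; have [_ [_ ->]] := Hr i.
by apply: ler_wpM2r; [exact: edist_ge0 | exact: (le_bigmax _ r i)].
Qed.

Lemma word_ratio {R : realType} {d : nat} {I : Type} {phi : I -> 'rV[R]_d -> 'rV[R]_d} {q : R} :
  0 <= q -> (forall i x y, edist (phi i x) (phi i y) <= q * edist x y) ->
  forall w x y, edist (word_map phi w x) (word_map phi w y) <= q ^+ size w * edist x y.
Proof.
move=> q0 Hq; elim=> [|i w IH] x y /=; first by rewrite expr0 mul1r.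
apply: (le_trans (Hq _ _ _)); rewrite exprS -mulrA; exact: ler_wpM2l.
Qed.

Lemma word_inv {R : realType} {d : nat} (I : Type) (phi : I -> 'rV[R]_d -> 'rV[R]_d) (F : set 'rV[R]_d) :
  (forall i, phi i @` F `<=` F) -> forall w x, F x -> F (word_map phi w x).
Proof.
move=> HF; elim=> [|i w IH] x Fx //=.
apply: (HF i); exists (word_map phi w x) => //; exact: IH.
Qed.

Lemma decomp {R : realType} {d : nat} {I : finType} {phi : I -> 'rV[R]_d -> 'rV[R]_d} {K : set 'rV[R]_d} :
  K = \bigcup_(i in setT) (phi i @` K) ->
  forall n x, K x -> exists w k, size w = n /\ K k /\ x = word_map phi w k.
Proof.
move=> KE; elim=> [|n IH] x Kx; first by exists [::], x.
move: Kx; rewrite {1}KE => -[i _ [k Kk <-]].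
have [w [k' [sw [Kk' ->]]]] := IH k Kk.
by exists (i :: w), k'; rewrite /= sw.
Qed.

Lemma bound2 {R : realType} {d : nat} {A B : set 'rV[R]_d} :
  compact A -> compact B -> exists D, forall x y, A x -> B y -> edist x y <= D.
Proof.
have bnd : forall (C : set 'rV[R]_d), compact C -> exists M : R, 0 <= M /\
    forall x i, C x -> `|x 0 i| <= M.
  move=> C /compact_bounded [M [_ HM]].
  exists (Num.max 0 (M + 1)); split; first by rewrite le_max lexx.
  move=> x i Cx.
  have h : M < Num.max 0 (M + 1) by rewrite lt_max ltrDl ltr01 orbT.
  have /= hx := HM _ h x Cx; apply: le_trans hx.
  rewrite [X in _ <= X]mx_normrE.
  exact: (le_bigmax _ (fun ij : 'I_1 * 'I_d => `|x ij.1 ij.2|) (0, i)).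
move=> cA cB.
have [MA [MA0 HA]] := bnd A cA; have [MB [MB0 HB]] := bnd B cB.
exists (Num.sqrt (((MA + MB) ^+ 2) *+ d)) => x y Ax By.
apply: ler_wsqrtr.
have -> : ((MA + MB) ^+ 2) *+ d = \sum_(i < d) (MA + MB) ^+ 2.
  by rewrite sumr_const card_ord.
apply: ler_sum => i _.
have := HA x i Ax; have := HB y i By.
rewrite !ler_norml => /andP[h1 h2] /andP[h3 h4].
nra.
Qed.

Lemma power {R : realType} (D : R) {q e : R} : 0 <= q -> q < 1 -> 0 < e ->
  exists N, forall n, (N <= n)%N -> q ^+ n * D < e.
Proof.
move=> q0 q1 e0.
have [D0|D0] := lerP D 0.
  exists 0%N => n _; apply: (le_lt_trans _ e0).
  by rewrite mulr_ge0_le0 // exprn_ge0.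
have := @cvgr_lt _ _ _ _ _ 0 (cvg_expr (z := q) _) (e / D).
move=> /(_ _ _) [].
- by rewrite ger0_norm.
- by rewrite divr_gt0.
move=> N _ HN; exists N => n Hn.
by rewrite -ltr_pdivlMr //; apply: HN.
Qed.

Theorem lemma3p8 (R : realType) (d : nat) (I : finType)
  (phi : I -> 'rV[R]_d -> 'rV[R]_d) (K F : set 'rV[R]_d) (c : R) :
  (forall i, contracting_similarity (phi i)) ->
  is_attractor phi K ->
  F !=set0 -> compact F ->
  (forall i, phi i @` F `<=` F) ->
  0 < c ->
  (diffuse phi F c -> diffuse phi K c) /\
  (diffuse phi K c ->
     forall c' : R, 0 < c' -> c' < c ->
       exists N : nat, forall n : nat, (N <= n)%N ->
         diffuse (fun w : n.-tuple I => word_map phi w) F c').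
Proof.
move=> Hc [Kne Kc KE _] Fne Fc Finv c0.
have [q [q0 [q1 Hq]]] := unif_ratio Hc.
have [D HD] := bound2 Kc Fc.
have [f0 Ff0] := Fne; have [k0 Kk0] := Kne.
have Kinv : forall i, phi i @` K `<=` K.
  by move=> i _ [k Kk <-]; rewrite KE; exists i => //; exists k.
split.
  move=> HF L HL; have [j Hj] := HF L HL; exists j.
  rewrite -subset0 => _ [[x Kx <-] [y Ly hy]].
  set e := c - edist (phi j x) y.
  have e0 : 0 < e by rewrite /e subr_gt0.
  have [N HN] := power D q0 q1 e0.
  have [w [k [sw [Kk xE]]]] := decomp KE N x Kx.
  set f' := word_map phi w f0.
  have Ff' : F f' by exact: word_inv.
  have h1 : edist f' x < e.
    rewrite xE; apply: (le_lt_trans (word_ratio q0 Hq _ _ _)).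
    rewrite sw; apply: le_lt_trans (HN N (leqnn N)).
    by apply: ler_wpM2l; [exact: exprn_ge0 | rewrite edistC; exact: HD].
  have h2 : edist (phi j f') (phi j x) < e.
    apply: (le_lt_trans (Hq _ _ _)); apply: le_lt_trans h1.
    by rewrite -[X in _ <= X]mul1r; apply: ler_wpM2r; [exact: edist_ge0 | exact: ltW].
  have : (phi j @` F `&` open_nbhd L c) (phi j f').
    split; first by exists f'.
    exists y => //; apply: (le_lt_trans (edist_tri _ _ _ (phi j x) _)).
    move: h2; rewrite /e; lra.
  by rewrite Hj.
move=> HK c' c'0 c'c.
have cc0 : 0 < c - c' by rewrite subr_gt0.
have [N HN] := power D q0 q1 cc0.
exists N.+1 => -[//|m] Hm L HL.
have [i Hi] := HK L HL; exists (nseq_tuple m.+1 i).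
rewrite -subset0 => _ [[f Ff <-] [y Ly hy]].
set k' := word_map phi (nseq m i) k0.
have Kk' : K k' by exact: word_inv.
have h1 : edist (word_map phi (nseq m.+1 i) k0) (word_map phi (nseq m.+1 i) f) < c - c'.
  apply: (le_lt_trans (word_ratio q0 Hq _ _ _)).
  rewrite size_nseq; apply: le_lt_trans (HN m.+1 (leqW Hm)).
  by apply: ler_wpM2l; [exact: exprn_ge0 | exact: HD].
have : (phi i @` K `&` open_nbhd L c) (phi i k').
  split; first by exists k'.
  exists y => //.
  have -> : phi i k' = word_map phi (nseq m.+1 i) k0 by [].
  apply: (le_lt_trans (edist_tri _ _ _ (word_map phi (nseq m.+1 i) f) _)).
  move: hy h1 => /=; lra.
by rewrite Hi.
Qed.
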